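(* Let $\mathbb{F}$ be a field of characteristic $2$, $V$ a finite-dimensional $\mathbb{F}$-vector space and $b$ a non-degenerate symmetric bilinear form on $V$ with attached quadratic form $Q: x\mapsto b(x,x)$. Assume that $\operatorname{Ker} Q$ is totally $b$-singular. Then $\operatorname{Ker} Q$ is stable under every nilpotent $b$-symmetric endomorphism of $V$.
   Context: $\operatorname{Ker} Q = \{x\in V : Q(x)=0\}$, a linear subspace in characteristic $2$. A subspace $X$ is totally $b$-singular if $b(x,y)=0$ for all $x,y\in X$. An endomorphism $u$ is $b$-symmetric if $(x,y)\mapsto b(x,u(y))$ is symmetric. *)

(* Defs.v *)
From HB Require Import structures.
From mathcomp Require Import all_boot all_order all_algebra.
From mathcomp Require Export sesquilinear.
Set Implicit Arguments.
Unset Strict Implicit.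
Unset Printing Implicit Defensive.
Import GRing.Theory.
Local Open Scope ring_scope.

Section Defs.
Variables (F : fieldType) (V : vectType F).

Definition quadf (b : V -> V -> F) (x : V) : F := b x x.

Definition kerQ (b : V -> V -> F) : pred V := [pred x | quadf b x == 0].

Definition totally_singular (b : V -> V -> F) (X : pred V) : Prop :=
  {in X &, forall x y, b x y = 0}.

Definition b_symmetric (b : V -> V -> F) (u : 'End(V)) : Prop :=
  forall x y, b x (u y) = b y (u x).

Definition nilpotent_end (u : 'End(V)) : Prop :=
  exists k : nat, forall x, iter k u x = 0.

Definition stable_under (u : 'End(V)) (X : pred V) : Prop :=
  {in X, forall x, u x \in X}.
End Defs.

(* Main.v *)
Require Import Defs.
From HB Require Import structures.
From mathcomp Require Import all_boot all_order all_algebra.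
From mathcomp Require Import sesquilinear zify.
Import GRing.Theory.
Local Open Scope ring_scope.

Theorem lemma5p1 (F : fieldType) (V : vectType F) (b : {symmetric V}) :
  2 \in [pchar F] ->
  nondegenerate b ->
  totally_singular b (kerQ b) ->
  forall u : 'End(V), nilpotent_end u -> b_symmetric b u ->
    stable_under u (kerQ b).
Proof.
move=> _ _ hts u [N hN] hsym.
have bC : forall x y : V, b x y = b y x.
  by move=> x y; rewrite (hermC b) /= expr0 mul1r.
have adj : forall m (y z : V), b (iter m u y) z = b y (iter m u z).
  elim=> [//|m IH] y z /=.
  by rewrite bC hsym IH -iterSr.
have it0 : forall k, iter k u 0 = 0.
  by elim=> [//|k IH] /=; rewrite IH linear0.
have big : forall m x, (N <= m)%N -> iter m u x = 0.
  move=> m x hm; rewrite -(subnK hm) iterD hN; exact: it0.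
have key : forall d m, (N <= m + d)%N -> (0 < m)%N ->
    {in kerQ b, forall x, iter m u x \in kerQ b}.
  elim=> [|d IH] m hm m0 x hx.
    by rewrite addn0 in hm; rewrite big // inE /quadf linear0.
  have h2 : iter (m + m) u x \in kerQ b.
    apply: (IH (m + m)%N) => //; last by rewrite addn_gt0 m0.
    move: hm m0; clear; lia.
  rewrite inE /quadf adj -iterD; apply/eqP; exact: hts.
move=> x hx; exact: (key N 1%N).
Qed.
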